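(* Let $\mathtt{a}\in\Sigma$. For every $k\in\mathbb{N}$ there exist $p,q\in\mathbb{N}$ with $p\neq q$ such that $\mathtt{a}^p \equiv_k \mathtt{a}^q$.
   Context: $\Sigma$ is a fixed finite alphabet. For $w \in \Sigma^*$, $\mathsf{Facs}(w)$ is the set of all factors (contiguous subwords, including $\varepsilon$ and $w$) of $w$. The structure $\mathfrak{A}_w$ representing $w$ has universe $\mathsf{Facs}(w)\cup\{\perp\}$, a ternary relation $R_\circ=\{(x,y,z)\in\mathsf{Facs}(w)^3 : x=y\cdot z\}$, for each letter $\mathtt{a}\in\Sigma$ a constant interpreted as $\mathtt{a}$ if $\mathtt{a}$ occurs in $w$ and as $\perp$ otherwise, and a constant $\varepsilon$ interpreted as the empty word. The $k$-round Ehrenfeucht–Fraïssé game on $\mathfrak{A}_w,\mathfrak{A}_v$: in each round $i$, Spoiler picks one of the two structures and an element of its universe, Duplicator answers with an element of the other structure's universe; let $a_i$ (in $\mathfrak{A}_w$) and $b_i$ (in $\mathfrak{A}_v$) be the chosen elements. Duplicator wins if the tuples $(a_1,\dots,a_k,\vec c^{\,\mathfrak{A}_w})$ and $(b_1,\dots,b_k,\vec c^{\,\mathfrak{A}_v})$, where $\vec c$ lists the interpretations of all constants, form a partial isomorphism: for all indices $i,j,l$, $a_i$ equals the interpretation of a constant $c$ iff $b_i$ equals the interpretation of $c$; $a_i=a_j$ iff $b_i=b_j$; and $a_i=a_j\cdot a_l$ iff $b_i=b_j\cdot b_l$. We write $w\equiv_k v$ if Duplicator has a winning strategy in the $k$-round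 game. *)

(* Defs.v *)
From mathcomp Require Import all_boot.
Set Implicit Arguments. Unset Strict Implicit. Unset Printing Implicit Defensive.

(* Elements of the structure A_w are encoded in [option (seq Sigma)]:
   [None] is bottom, [Some u] is the word u (a member of the universe iff
   u is a factor of w). *)
Section Struct.
Variable Sigma : finType.
Notation word := (seq Sigma).
Notation elt := (option word).

Definition is_factor (u w : word) : bool := infix u w.

Definition in_univ (w : word) (x : elt) : bool :=
  match x with None => true | Some u => is_factor u w end.

Definition Rcat (w : word) (x y z : elt) : bool :=
  match x, y, z with
  | Some x', Some y', Some z' =>
      [&& is_factor x' w, is_factor y' w, is_factor z' w & x' == y' ++ z']
  | _, _, _ => false
  end.

Definition const_letter (w : word) (a : Sigma) : elt :=
  if a \in w then Some [:: a] else None.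

Definition consts (w : word) : seq elt :=
  Some [::] :: [seq const_letter w a | a <- enum Sigma].

Definition partial_iso (w v : word) (xs ys : seq elt) : Prop :=
  size xs = size ys /\
  forall i j l, i < size xs -> j < size xs -> l < size xs ->
    ((nth None xs i == nth None xs j) = (nth None ys i == nth None ys j)) /\
    (Rcat w (nth None xs i) (nth None xs j) (nth None xs l) =
     Rcat v (nth None ys i) (nth None ys j) (nth None ys l)).

Fixpoint dup_wins (w v : word) (n : nat) (xs ys : seq elt) : Prop :=
  match n with
  | 0 => partial_iso w v (xs ++ consts w) (ys ++ consts v)
  | n'.+1 =>
      (forall x, in_univ w x -> exists2 y, in_univ v y &
          dup_wins w v n' (rcons xs x) (rcons ys y)) /\
      (forall y, in_univ v y -> exists2 x, in_univ w x &
          dup_wins w v n' (rcons xs x) (rcons ys y))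
  end.

Definition ef_equiv (k : nat) (w v : word) : Prop := dup_wins w v k [::] [::].
End Struct.

(* Main.v *)
Require Import Defs.
From mathcomp Require Import all_boot.
From Stdlib Require Import Classical ClassicalEpsilon.
Set Implicit Arguments. Unset Strict Implicit.

Definition asb (P : Prop) : bool :=
  if excluded_middle_informative P then true else false.
Lemma asbP (P : Prop) : asb P = true <-> P.
Proof. by rewrite /asb; case: excluded_middle_informative. Qed.

Fixpoint F (N : nat) (n m : nat) : finType :=
  match n with
  | 0 => {ffun 'I_(m+N) * 'I_(m+N) * 'I_(m+N) -> bool * bool}
  | n'.+1 => {set F N n' m.+1}
  end.

Section S.
Variable Sigma : finType.
Notation N := (size (enum Sigma)).+1.

Lemma size_consts (w : seq Sigma) : size (consts w) = N.
Proof. by rewrite /consts /= size_map. Qed.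

Definition atom m (w : seq Sigma) (xs : seq (option (seq Sigma))) : F N 0 m :=
  [ffun t : 'I_(m+N) * 'I_(m+N) * 'I_(m+N) =>
     let L := xs ++ consts w in
     (nth None L t.1.1 == nth None L t.1.2,
      Rcat w (nth None L t.1.1) (nth None L t.1.2) (nth None L t.2))].

Fixpoint tp n m (w : seq Sigma) (xs : seq (option (seq Sigma))) : F N n m :=
  match n return F N n m with
  | 0 => atom m w xs
  | n'.+1 => [set t | asb (exists x, in_univ w x /\ tp n' m.+1 w (rcons xs x) = t)]
  end.

Lemma tp_dup n : forall m w v xs ys, size xs = m -> size ys = m ->
  tp n m w xs = tp n m v ys -> dup_wins w v n xs ys.
Proof.
elim: n => [|n IH] m w v xs ys sx sy /= E.
  split; first by rewrite !size_cat !size_consts sx sy.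
  move=> i j l hi hj hl.
  rewrite size_cat size_consts sx in hi hj hl.
  have := congr1 (fun f : F N 0 m => f (Ordinal hi, Ordinal hj, Ordinal hl)) E.
  by rewrite /= !ffunE /= => -[-> ->].
split.
  move=> x hx.
  have : tp n m.+1 w (rcons xs x) \in tp n.+1 m v ys.
    by rewrite /= -E inE; apply/asbP; exists x.
  rewrite /= inE => /asbP [y [hy Ey]].
  exists y => //; apply: IH; rewrite ?size_rcons ?sx ?sy //.
move=> y hy.
have : tp n m.+1 v (rcons ys y) \in tp n.+1 m w xs.
  by rewrite /= E inE; apply/asbP; exists y.
rewrite /= inE => /asbP [x [hx Ex]].
exists x => //; apply: IH; rewrite ?size_rcons ?sx ?sy //.
Qed.

Lemma pigeon (T : finType) (f : nat -> T) : exists p q, p <> q /\ f p = f q.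
Proof.
pose g := fun i : 'I_(#|T|.+1) => f i.
have ninj : ~ injective g.
  move=> inj; have := leq_card g inj; rewrite card_ord; by rewrite ltnn.
apply: NNPP => H; apply: ninj => i j Eij.
apply: val_inj; apply: NNPP => ne; apply: H.
by exists (val i), (val j).
Qed.
End S.

Theorem lemma3p4 (Sigma : finType) (a : Sigma) (k : nat) :
  exists p q : nat, p <> q /\ ef_equiv k (nseq p a) (nseq q a).
Proof.
have [p [q [ne E]]] := pigeon (fun p => tp k 0 (nseq p a) [::]).
by exists p, q; split => //; apply: tp_dup.
Qed.
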